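(* Let $\{\Theta_n\}_{n\ge0}$ be a family of lattice congruences on the weak orders $S_n$ that is both translational and insertional (an $\mathcal{H}$-family). Then the map $c$ embeds $(\mathbb{K}[Z^\Theta_\infty],\bullet_Z,\Delta_Z)$ as a sub Hopf algebra of the Malvenuto–Reutenauer Hopf algebra $(\mathbb{K}[S_\infty],\bullet_S,\Delta_S)$.
   Context: $S_n$: permutations of $[n]$ in one-line notation, with the right weak order (inclusion of sets of inverted value pairs), a lattice. $u\times v=u_1\cdots u_p(p+v_1)\cdots(p+v_q)$ for $u\in S_p,v\in S_q$. $\mathrm{st}(a_1,\dots,a_k)$ is the $u\in S_k$ with $u_i<u_j\iff a_i<a_j$. For $x\in S_{p+q}$, $x_{\bar p}:=u\times v$ with $u$ ($v$) the standardization of the subsequence of entries of $x$ in $[1,p]$ (in $[p+1,p+q]$). $\pi_\downarrow x$: minimum of the $\Theta_n$-class of $x$. Translational: $u\times v\equiv u'\times v'\pmod{\Theta_{p+q}}$ iff $u\equiv u'\pmod{\Theta_p}$ and $v\equiv v'\pmod{\Theta_q}$, for all $p,q$. Insertional: for every $p$-subset $Q\subseteq[p+q]$ and $\varphi_Q(u,v)$ the unique $x\in S_{p+q}$ with $\{x_1,..,x_p\}=Q$, $\mathrm{st}(x_1..x_p)=u$, $\mathrm{st}(x_{p+1}..x_{p+q})=v$: if $u\equiv u'$ mod $\Theta_p$ and $v\equiv v'$ mod $\Theta_q$ then $\varphi_Q(u,v)\equiv\varphi_Q(u',v')$ mod $\Theta_{p+q}$. $\mathbb{K}[S_\infty]=\bigoplus_n\mathbb{K}[S_n]$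 ($\mathbb{K}$ a field) with $u\bullet_S v=\sum_{x\in S_{p+q},x_{\bar p}=u\times v}x$ and $\Delta_S(x)=\sum_{p=0}^n\mathrm{st}(x_1..x_p)\otimes\mathrm{st}(x_{p+1}..x_n)$. $Z_n=\{x\in S_n:\pi_\downarrow x=x\}$, $\mathbb{K}[Z^\Theta_\infty]=\bigoplus_n\mathbb{K}[Z_n]$, $u\bullet_Z v=\sum_{x\in Z_{p+q},x_{\bar p}=u\times v}x$; $c$ maps $x\in Z_n$ to the sum of its class; $r$ fixes $x$ if $\pi_\downarrow x=x$ and kills it otherwise; $\Delta_Z=(r\otimes r)\circ\Delta_S\circ c$. *)

(* Defs.v *)
From HB Require Import structures.
From mathcomp Require Import all_boot all_order all_algebra.
Set Implicit Arguments. Unset Strict Implicit. Unset Printing Implicit Defensive.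
Import GRing.Theory.

(* Conventions: a permutation of [n] is represented by its one-line notation
   as a word (seq nat) with values 0..n-1 (i.e. the paper's values shifted
   down by one). *)
Definition S (n : nat) : seq (seq nat) := permutations (iota 0 n).

Definition inv (w : seq nat) : seq (nat * nat) :=
  [seq ab <- [seq (a, b) | a <- w, b <- w] | (ab.1 < ab.2) && (index ab.2 w < index ab.1 w)].

Definition weak_le (x y : seq nat) : bool := all (fun ab => ab \in inv y) (inv x).

Definition is_meet (n : nat) (m x y : seq nat) : Prop :=
  [/\ m \in S n, weak_le m x, weak_le m y &
      forall z, z \in S n -> weak_le z x -> weak_le z y -> weak_le z m].

Definition is_join (n : nat) (j x y : seq nat) : Prop :=
  [/\ j \in S n, weak_le x j, weak_le y j &
      forall z, z \in S n -> weak_le x z -> weak_le y z -> weak_le j z].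

Definition lattice_congruence (n : nat) (R : rel (seq nat)) : Prop :=
  [/\ (forall x, x \in S n -> R x x),
      (forall x y, x \in S n -> y \in S n -> R x y -> R y x),
      (forall x y z, x \in S n -> y \in S n -> z \in S n ->
                     R x y -> R y z -> R x z),
      (forall x y z m m', x \in S n -> y \in S n -> z \in S n ->
         R x y -> is_meet n m x z -> is_meet n m' y z -> R m m') &
      (forall x y z j j', x \in S n -> y \in S n -> z \in S n ->
         R x y -> is_join n j x z -> is_join n j' y z -> R j j')].

Definition st (s : seq nat) : seq nat := [seq count (fun b => b < a) s | a <- s].

Definition cross (u v : seq nat) : seq nat := u ++ [seq size u + b | b <- v].

Definition xbar (p : nat) (x : seq nat) : seq nat :=
  cross (st [seq a <- x | a < p]) (st [seq a <- x | p <= a]).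

Definition translational (Theta : nat -> rel (seq nat)) : Prop :=
  forall p q u u' v v', u \in S p -> u' \in S p -> v \in S q -> v' \in S q ->
    Theta (p + q) (cross u v) (cross u' v') <-> (Theta p u u' /\ Theta q v v').

Definition is_phi (p q : nat) (Q : seq nat) (u v x : seq nat) : bool :=
  [&& x \in S (p + q), perm_eq (take p x) Q,
      st (take p x) == u & st (drop p x) == v].

Definition insertional (Theta : nat -> rel (seq nat)) : Prop :=
  forall p q (Q : seq nat), uniq Q -> size Q = p -> all (fun a => a < p + q) Q ->
  forall u u' v v' x x', u \in S p -> u' \in S p -> v \in S q -> v' \in S q ->
    Theta p u u' -> Theta q v v' ->
    is_phi p q Q u v x -> is_phi p q Q u' v' x' -> Theta (p + q) x x'.

Definition H_family (Theta : nat -> rel (seq nat)) : Prop :=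
  (forall n, lattice_congruence n (Theta n)) /\ translational Theta /\ insertional Theta.

(* Z_n : minima of the classes (pi_down x = x) *)
Definition inZ (Theta : nat -> rel (seq nat)) (n : nat) (x : seq nat) : bool :=
  (x \in S n) && all (fun y => Theta n x y ==> weak_le x y) (S n).

Section Hopf.
Variables (K : fieldType) (Theta : nat -> rel (seq nat)).
Local Open Scope ring_scope.

(* Elements of K[S_infty] are coefficient functions seq nat -> K (supported on
   permutation words); elements of the tensor square are functions on pairs. *)

Definition prodS (u v : seq nat) : seq nat -> K :=
  fun x => ((x \in S (size u + size v)) && (xbar (size u) x == cross u v))%:R.
Definition prodZ (u v : seq nat) : seq nat -> K :=
  fun x => (inZ Theta (size u + size v) x && (xbar (size u) x == cross u v))%:R.

Definition coprodS (x : seq nat) : seq nat * seq nat -> K :=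
  fun ab => \sum_(p < (size x).+1) (ab == (st (take p x), st (drop p x)))%:R.

Definition cmap (n : nat) (x : seq nat) : seq nat -> K :=
  fun y => ((y \in S n) && Theta n x y)%:R.

Definition rmap (f : seq nat -> K) : seq nat -> K :=
  fun y => if inZ Theta (size y) y then f y else 0.
Definition rr (g : seq nat * seq nat -> K) : seq nat * seq nat -> K :=
  fun ab => if inZ Theta (size ab.1) ab.1 && inZ Theta (size ab.2) ab.2
            then g ab else 0.

Definition coprodS_lin (n : nat) (f : seq nat -> K) : seq nat * seq nat -> K :=
  fun ab => \sum_(y <- S n) f y * coprodS y ab.

Definition coprodZ (n : nat) (x : seq nat) : seq nat * seq nat -> K :=
  rr (coprodS_lin n (cmap n x)).

Definition cmap_lin (n : nat) (f : seq nat -> K) : seq nat -> K :=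
  fun y => \sum_(x <- S n) f x * cmap n x y.

Definition cc_lin (n : nat) (h : seq nat * seq nat -> K) : seq nat * seq nat -> K :=
  fun ab => \sum_(p < n.+1) \sum_(u <- S p) \sum_(w <- S (n - p))
              h (u, w) * cmap p u ab.1 * cmap (n - p) w ab.2.

Definition prodS_lin (p q : nat) (f g : seq nat -> K) : seq nat -> K :=
  fun x => \sum_(u <- S p) \sum_(v <- S q) f u * g v * prodS u v x.

End Hopf.

Arguments prodS K u v x : clear implicits.
Arguments prodZ K Theta u v x : clear implicits.
Arguments coprodS K x ab : clear implicits.
Arguments cmap K Theta n x y : clear implicits.
Arguments rmap K Theta f y : clear implicits.
Arguments rr K Theta g ab : clear implicits.
Arguments coprodS_lin K n f ab : clear implicits.
Arguments coprodZ K Theta n x ab : clear implicits.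
Arguments cmap_lin K Theta n f y : clear implicits.
Arguments cc_lin K Theta n h ab : clear implicits.
Arguments prodS_lin K p q f g x : clear implicits.

(* Main.v *)
Require Import Defs.
From mathcomp Require Import all_boot all_order all_algebra.
From mathcomp Require Import zify.
From Stdlib Require Import ClassicalEpsilon Relation_Operators FunctionalExtensionality.
Set Implicit Arguments. Unset Strict Implicit. Unset Printing Implicit Defensive.
Notation inv := Defs.inv.

Lemma memS n w : (w \in S n) = perm_eq w (iota 0 n).
Proof. by rewrite /S mem_permutations. Qed.

Lemma S_uniq n w : w \in S n -> uniq w.
Proof. by rewrite memS => /perm_uniq ->; apply: iota_uniq. Qed.

Lemma S_mem n w a : w \in S n -> (a \in w) = (a < n).
Proof. by rewrite memS => /perm_mem ->; rewrite mem_iota. Qed.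

Lemma S_size n w : w \in S n -> size w = n.
Proof. by rewrite memS => /perm_size ->; rewrite size_iota. Qed.

Lemma mem_inv w a b :
  ((a, b) \in inv w) = [&& a \in w, b \in w, a < b & index b w < index a w].
Proof.
rewrite /inv mem_filter /=.
apply/idP/idP.
- case/andP=> H /allpairsP[[x y] /= [xw yw [Ex Ey]]]; subst x y.
  by rewrite xw yw.
- case/and4P=> aw bw ab ib; rewrite ab ib /=.
  by apply/allpairsP; exists (a, b).
Qed.

Lemma mem_invS n w a b : w \in S n ->
  ((a, b) \in inv w) = [&& a < b, b < n & index b w < index a w].
Proof.
move=> wS; rewrite mem_inv !(S_mem _ wS).
case: (ltnP a b) => ab /=; last by rewrite !andbF.
case: (ltnP b n) => bn /=; last by rewrite andbF.
by rewrite (ltn_trans ab bn).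
Qed.

Lemma weak_leP x y :
  reflect (forall a b, (a, b) \in inv x -> (a, b) \in inv y) (weak_le x y).
Proof.
apply: (iffP allP) => [H a b|H [a b]]; first exact: H.
exact: H.
Qed.

Lemma weak_le_refl x : weak_le x x.
Proof. by apply/weak_leP. Qed.

Lemma weak_le_trans x y z : weak_le x y -> weak_le y z -> weak_le x z.
Proof. by move=> /weak_leP H1 /weak_leP H2; apply/weak_leP => a b /H1 /H2. Qed.

Lemma ltn_neq_swap i j : i != j -> (j < i) = ~~ (i < j).
Proof. by move=> ne; rewrite -leqNgt ltn_neqAle eq_sym ne. Qed.

Lemma index_count (w : seq nat) a : uniq w -> a \in w ->
  index a w = count (fun b => index b w < index a w) w.
Proof.
move=> uw aw.
have Hm : [seq index b w | b <- w] = iota 0 (size w).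
  apply: (@eq_from_nth _ 0); rewrite size_map ?size_iota // => i iw.
  by rewrite (nth_map 0) // nth_iota // index_uniq.
rewrite -(count_map (fun b => index b w) (fun i => i < index a w)) Hm.
have ia : index a w <= size w by apply: ltnW; rewrite index_mem.
rewrite -(subnKC ia) iotaD count_cat add0n.
rewrite (@eq_in_count _ _ predT) ?count_predT ?size_iota; last first.
  by move=> i; rewrite mem_iota.
rewrite (@eq_in_count _ _ pred0) ?count_pred0 ?addn0 //.
by move=> i; rewrite mem_iota /= => /andP[H _]; rewrite ltnNge H.
Qed.

Lemma weak_le_antisym n x y : x \in S n -> y \in S n ->
  weak_le x y -> weak_le y x -> x = y.
Proof.
move=> xS yS /weak_leP Hxy /weak_leP Hyx.
have Hiff : forall a b, a < n -> b < n -> a != b ->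
   (index b x < index a x) = (index b y < index a y).
  move=> a b an bn ab.
  have Hne : forall w, w \in S n -> index a w != index b w.
    move=> w wS; apply/negP=> /eqP E.
    have : nth 0 w (index a w) = nth 0 w (index b w) by rewrite E.
    by rewrite !nth_index ?(S_mem _ wS) // => /eqP; rewrite (negbTE ab).
  case: (ltngtP a b) => [lab|lba|/eqP]; last by rewrite (negbTE ab).
  - apply/idP/idP => H.
    + by have := Hxy a b; rewrite !(mem_invS _ _ xS) !(mem_invS _ _ yS) lab bn H; apply.
    + by have := Hyx a b; rewrite !(mem_invS _ _ xS) !(mem_invS _ _ yS) lab bn H; apply.
  - have E1 := Hne x xS; have E2 := Hne y yS.
    rewrite (ltn_neq_swap E1) (ltn_neq_swap E2).
    congr negb; apply/idP/idP => H.
    + by have := Hxy b a; rewrite !(mem_invS _ _ xS) !(mem_invS _ _ yS) lba an H; apply.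
    + by have := Hyx b a; rewrite !(mem_invS _ _ xS) !(mem_invS _ _ yS) lba an H; apply.
have Hidx : forall a, a < n -> index a x = index a y.
  move=> a an.
  rewrite (index_count (S_uniq xS)) ?(S_mem _ xS) //.
  rewrite (index_count (S_uniq yS)) ?(S_mem _ yS) //.
  have /permP -> : perm_eq x (iota 0 n) by rewrite -memS.
  have /permP -> : perm_eq y (iota 0 n) by rewrite -memS.
  apply: eq_in_count => b; rewrite mem_iota /= => bn.
  case: (eqVneq a b) => [->|ab]; first by rewrite !ltnn.
  exact: Hiff.
apply: (@eq_from_nth _ 0); first by rewrite (S_size xS) (S_size yS).
move=> i; rewrite (S_size xS) => iN.
have xin : nth 0 x i \in x by rewrite mem_nth // (S_size xS).
have := Hidx (nth 0 x i); rewrite -(S_mem _ xS) => /(_ xin).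
rewrite index_uniq ?(S_size xS) ?(S_uniq xS) // => E.
by rewrite {2}E nth_index // (S_mem _ yS) -(S_mem _ xS).
Qed.

Definition dec (P : Prop) : bool := if excluded_middle_informative P then true else false.
Lemma decP P : reflect P (dec P).
Proof. by rewrite /dec; case: excluded_middle_informative => H; constructor. Qed.

Lemma inv_trans n w a b c : w \in S n ->
  (a, b) \in inv w -> (b, c) \in inv w -> (a, c) \in inv w.
Proof.
move=> wS; rewrite !(mem_invS _ _ wS) => /and3P[ab bn i1] /and3P[bc cn i2].
by rewrite (ltn_trans ab bc) cn (ltn_trans i2 i1).
Qed.

Lemma index_neq n w a b : w \in S n -> a < n -> b < n -> a != b -> index a w != index b w.
Proof.
move=> wS an bn ab; apply/negP=> /eqP E.
have : nth 0 w (index a w) = nth 0 w (index b w) by rewrite E.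
by rewrite !nth_index ?(S_mem _ wS) // => /eqP; rewrite (negbTE ab).
Qed.

Lemma inv_cotrans n w a b c : w \in S n -> a < b -> b < c ->
  (a, c) \in inv w -> ((a, b) \in inv w) || ((b, c) \in inv w).
Proof.
move=> wS ab bc; rewrite !(mem_invS _ _ wS) => /and3P[ac cn i1].
have bn : b < n := ltn_trans bc cn.
rewrite ab bc bn cn /=.
have an : a < n := ltn_trans ab bn.
have := index_neq wS an bn (negbT (ltn_eqF ab)); rewrite neq_ltn => /orP[H|H].
- by rewrite (ltn_trans i1 H) orbT.
- by rewrite H.
Qed.

Section Join.
Variables (n : nat) (x y : seq nat).
Hypotheses (xS : x \in S n) (yS : y \in S n).

Definition ej (a b : nat) : Prop := ((a, b) \in inv x) \/ ((a, b) \in inv y).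
Definition Rj := clos_trans nat ej.

Lemma ej_lt a b : ej a b -> a < b /\ b < n.
Proof.
by case; [rewrite (mem_invS _ _ xS)|rewrite (mem_invS _ _ yS)] => /and3P[].
Qed.

Lemma Rj_lt a b : Rj a b -> a < b /\ b < n.
Proof.
elim=> [u v /ej_lt //|u v w _ [h1 _] _ [h2 h3]].
by split=> //; apply: ltn_trans h2.
Qed.

Lemma Rj_cotrans a c : Rj a c -> forall b, a < b -> b < c -> Rj a b \/ Rj b c.
Proof.
elim=> [u v H b ub bv|u m v H1 IH1 H2 IH2 b ub bv].
- case: H => H.
  + by case/orP: (inv_cotrans xS ub bv H) => K; [left|right]; apply: t_step; left.
  + by case/orP: (inv_cotrans yS ub bv H) => K; [left|right]; apply: t_step; right.
- have [um _] := Rj_lt H1; have [mv _] := Rj_lt H2.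
  case: (ltngtP b m) => [bm|mb|->].
  + case: (IH1 b ub bm) => K; first by left.
    by right; apply: t_trans K H2.
  + case: (IH2 b mb bv) => K; last by right.
    by left; apply: t_trans H1 K.
  + by left.
Qed.

Definition prec (i j : nat) : bool :=
  ((i < j) && ~~ dec (Rj i j)) || ((j < i) && dec (Rj j i)).

Lemma prec_irr i : ~~ prec i i.
Proof. by rewrite /prec ltnn. Qed.

Lemma prec_asym i j : prec i j -> ~~ prec j i.
Proof.
rewrite /prec; case: (ltngtP i j) => //= _; rewrite ?orbF;
by case: (dec (Rj i j)); case: (dec (Rj j i)).
Qed.

Lemma prec_trans i j k : prec i j -> prec j k -> prec i k.
Proof.
rewrite /prec.
case: (ltngtP i j) => ij //=; rewrite ?orbF;
case: (ltngtP j k) => jk //=; rewrite ?orbF;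
move=> /decP Hij /decP Hjk;
case: (ltngtP i k) => ik //=; rewrite ?orbF;
try (match goal with |- is_true (~~ dec _) => apply/negP; move/decP end);
try (match goal with |- is_true (dec _) => apply/decP end);
try (match goal with |- is_true false => exfalso end);
try lia; try (subst; tauto).
- by move=> H; case: (Rj_cotrans H ij jk).
- by move=> H; apply: Hij; apply: t_trans H Hjk.
- by case: (Rj_cotrans Hjk ik ij).
- by move=> H; apply: Hjk; apply: t_trans Hij H.
- by case: (Rj_cotrans Hij jk ik).
- by apply: t_trans Hjk Hij.
Qed.


Definition lej i j := (i == j) || prec i j.

Lemma lej_trans : transitive lej.
Proof.
move=> j i k; rewrite /lej => /orP[/eqP->//|H1] /orP[/eqP<-|H2]; first by rewrite H1 orbT.
by rewrite (prec_trans H1 H2) orbT.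
Qed.

Lemma lej_total : total lej.
Proof.
move=> i j; rewrite /lej /prec; case: (ltngtP i j) => //= _; rewrite ?orbF;
by case: (dec _); rewrite ?orbT.
Qed.

Definition zj := sort lej (iota 0 n).

Lemma zjS : zj \in S n.
Proof. by rewrite memS /zj perm_sort. Qed.

Lemma zj_index a b : a < n -> b < n -> a != b ->
  (index a zj < index b zj) = prec a b.
Proof.
move=> an bn ab.
have az : a \in zj by rewrite (S_mem _ zjS).
have bz : b \in zj by rewrite (S_mem _ zjS).
apply/idP/idP => H.
- have := sorted_ltn_index lej_trans (sort_sorted lej_total _) _ _ az bz H.
  by rewrite /lej (negbTE ab).
- apply: contraTT H; rewrite -leqNgt leq_eqVlt eq_sym (negbTE (index_neq zjS an bn ab)) /= => H.
  have := sorted_ltn_index lej_trans (sort_sorted lej_total _) _ _ bz az H.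
  rewrite /lej eq_sym (negbTE ab) /= => H'.
  exact: prec_asym.
Qed.

Lemma zj_inv a b : ((a, b) \in inv zj) = (a < b) && dec (Rj a b).
Proof.
rewrite (mem_invS _ _ zjS).
case: (ltnP a b) => ab //=.
case: (ltnP b n) => bn /=.
- rewrite zj_index ?(ltn_trans ab bn) // ?(negbT (gtn_eqF ab)) //.
  by rewrite /prec ltnNge (ltnW ab) /= ab.
- by apply/esym/negbTE/negP => /decP /Rj_lt [_]; rewrite ltnNge bn.
Qed.

Lemma join_ex : is_join n zj x y.
Proof.
split; first exact: zjS.
- apply/weak_leP => a b H; rewrite zj_inv.
  move: (H); rewrite (mem_invS _ _ xS) => /and3P[-> _ _] /=.
  by apply/decP/t_step; left.
- apply/weak_leP => a b H; rewrite zj_inv.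
  move: (H); rewrite (mem_invS _ _ yS) => /and3P[-> _ _] /=.
  by apply/decP/t_step; right.
- move=> w wS /weak_leP Hx /weak_leP Hy; apply/weak_leP => a b.
  rewrite zj_inv => /andP[_ /decP].
  elim=> [u v [/Hx|/Hy] //|u m v _ H1 _ H2].
  exact: inv_trans wS H1 H2.
Qed.
End Join.

Lemma join_exists n x y : x \in S n -> y \in S n -> exists j, is_join n j x y.
Proof. by move=> xS yS; exists (zj n x y); apply: join_ex. Qed.


Lemma index_rev (w : seq nat) a : uniq w -> a \in w ->
  index a (rev w) = (size w).-1 - index a w.
Proof.
move=> uw aw.
have ia : index a w < size w by rewrite index_mem.
have k_lt : (size w).-1 - index a w < size (rev w) by rewrite size_rev; lia.
have : nth 0 (rev w) ((size w).-1 - index a w) = a.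
  rewrite nth_rev; last by rewrite size_rev in k_lt.
  have -> : size w - ((size w).-1 - index a w).+1 = index a w by lia.
  exact: nth_index.
move=> E; rewrite -{1}E index_uniq // rev_uniq //.
Qed.

Lemma rev_S n w : w \in S n -> rev w \in S n.
Proof. by rewrite !memS perm_rev. Qed.

Lemma inv_rev n w a b : w \in S n ->
  ((a, b) \in inv (rev w)) = [&& a < b, b < n & (a, b) \notin inv w].
Proof.
move=> wS; rewrite (mem_invS _ _ (rev_S wS)) (mem_invS _ _ wS).
case: (ltnP a b) => ab //=; case: (ltnP b n) => bn //=.
have an : a < n by apply: ltn_trans ab bn.
have aw : a \in w by rewrite (S_mem _ wS).
have bw : b \in w by rewrite (S_mem _ wS).
rewrite !index_rev ?(S_uniq wS) //.
have := index_neq wS an bn (negbT (ltn_eqF ab)).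
have := index_mem a w; have := index_mem b w; rewrite aw bw.
rewrite (S_size wS) -!subn1 => h1 h2 h3.
apply/idP/idP => h4; lia.
Qed.

Lemma weak_le_rev n u v : u \in S n -> v \in S n ->
  weak_le u v = weak_le (rev v) (rev u).
Proof.
move=> uS vS; apply/weak_leP/weak_leP => H a b.
- rewrite !(inv_rev _ _ vS) !(inv_rev _ _ uS) => /and3P[-> -> /=].
  by apply: contra; apply: H.
- move=> Hu; move: (Hu); rewrite (mem_invS _ _ uS) => /and3P[ab bn _].
  apply/negPn/negP => Hv.
  have := H a b; rewrite (inv_rev _ _ vS) (inv_rev _ _ uS) ab bn Hv Hu /=.
  by move/(_ isT).
Qed.

Lemma meet_exists n x y : x \in S n -> y \in S n -> exists m, is_meet n m x y.
Proof.
move=> xS yS.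
have [j [jS jx jy jmin]] := join_exists (rev_S xS) (rev_S yS).
exists (rev j); split.
- exact: rev_S.
- by rewrite (weak_le_rev (rev_S jS) xS) revK.
- by rewrite (weak_le_rev (rev_S jS) yS) revK.
- move=> z zS zx zy.
  rewrite (weak_le_rev zS (rev_S jS)) revK.
  apply: jmin; first exact: rev_S.
  + by rewrite -(weak_le_rev zS xS).
  + by rewrite -(weak_le_rev zS yS).
Qed.

Lemma inv_uniq w : uniq w -> uniq (inv w).
Proof.
move=> uw; rewrite /inv; apply: filter_uniq; apply: allpairs_uniq => //.
by move=> [a b] [c d] _ _ /= [-> ->].
Qed.

Lemma weak_lt_size n x y : x \in S n -> y \in S n -> weak_le x y -> x != y ->
  size (inv x) < size (inv y).
Proof.
move=> xS yS /weak_leP le ne.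
have sub : {subset inv x <= inv y} by move=> [a b]; apply: le.
rewrite ltn_neqAle uniq_leq_size ?inv_uniq ?(S_uniq xS) // andbT.
apply/negP => /eqP E.
have [_ Eq] := uniq_min_size (inv_uniq (S_uniq xS)) sub (eq_leq (esym E)).
move/eqP: ne; apply; apply: (weak_le_antisym xS yS); first by apply/weak_leP.
by apply/weak_leP => a b; rewrite Eq.
Qed.

Lemma is_meet_sym n m x y : is_meet n m x y -> is_meet n m y x.
Proof. by case=> H1 H2 H3 H4; split=> // z zS a b; apply: H4. Qed.

Lemma is_join_sym n m x y : is_join n m x y -> is_join n m y x.
Proof. by case=> H1 H2 H3 H4; split=> // z zS a b; apply: H4. Qed.

Lemma is_meet_le n x y : x \in S n -> weak_le x y -> is_meet n x x y.
Proof. by move=> xS le; split=> //; first exact: weak_le_refl; move=> z _ h _. Qed.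

Lemma is_join_le n x y : y \in S n -> weak_le x y -> is_join n y x y.
Proof. by move=> yS le; split=> //; first exact: weak_le_refl; move=> z _ _ h. Qed.

Definition is_min n (R : rel (seq nat)) x :=
  x \in S n /\ forall y, y \in S n -> R x y -> weak_le x y.

Lemma inZP Theta n x : reflect (is_min n (Theta n) x) (inZ Theta n x).
Proof.
apply: (iffP andP) => [[xS /allP H]|[xS H]]; split=> //.
- by move=> y yS Hy; have := H y yS; rewrite Hy.
- by apply/allP => y yS; apply/implyP; apply: H.
Qed.

Section Cong.
Variables (n : nat) (R : rel (seq nat)).
Hypothesis RC : lattice_congruence n R.

Lemma Rsym x y : x \in S n -> y \in S n -> R x y -> R y x.
Proof. by case: RC => _ H _ _ _; apply: H. Qed.
Lemma Rtrans x y z : x \in S n -> y \in S n -> z \in S n -> R x y -> R y z -> R x z.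
Proof. by case: RC => _ _ H _ _; apply: H. Qed.
Lemma Rrefl x : x \in S n -> R x x.
Proof. by case: RC => H _ _ _ _; apply: H. Qed.
Lemma Rmeet x y z m m' : x \in S n -> y \in S n -> z \in S n ->
  R x y -> is_meet n m x z -> is_meet n m' y z -> R m m'.
Proof. by case: RC => _ _ _ H _; apply: H. Qed.
Lemma Rjoin x y z m m' : x \in S n -> y \in S n -> z \in S n ->
  R x y -> is_join n m x z -> is_join n m' y z -> R m m'.
Proof. by case: RC => _ _ _ _ H; apply: H. Qed.

Lemma class_min y : y \in S n -> exists x, is_min n R x /\ R x y.
Proof.
have : forall k y, size (inv y) <= k -> y \in S n -> exists x, is_min n R x /\ R x y;
  last by move=> H yS; apply: (H _ y (leqnn _) yS).
elim=> [|k IH] y0 sz y0S.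
- exists y0; split; last exact: Rrefl.
  split=> // y' y'S _; apply/weak_leP => a b.
  by move: sz; rewrite leqn0 => /eqP /size0nil ->.
- case: (boolP (all (fun y' => R y0 y' ==> weak_le y0 y') (S n))) => [/allP H|].
    exists y0; split; last exact: Rrefl.
    by split=> // y' y'S Hy; have := H y' y'S; rewrite Hy.
  rewrite -has_predC => /hasP[y' y'S] /=; rewrite negb_imply => /andP[Ry ny].
  have [m Hm] := meet_exists y0S y'S.
  case: (Hm) => mS my0 my' _.
  have Rm : R m y0.
    apply: (@Rmeet y' y0 y0) => //; first exact: Rsym.
      exact: is_meet_sym.
    exact: is_meet_le (weak_le_refl _).
  have ne : m != y0.
    by apply: contraNneq ny => <-.
  have szm : size (inv m) <= k.
    have := weak_lt_size mS y0S my0 ne; lia.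
  have [x [xmin Rx]] := IH m szm mS.
  exists x; split=> //.
  by apply: (Rtrans _ mS y0S Rx Rm); case: xmin.
Qed.
End Cong.

Lemma min_unique n R x x' : lattice_congruence n R ->
  is_min n R x -> is_min n R x' -> R x x' -> x = x'.
Proof.
move=> RC [xS Hx] [x'S Hx'] Rxx'.
apply: (weak_le_antisym xS x'S); first exact: (Hx x' x'S Rxx').
exact: (Hx' x xS (Rsym RC xS x'S Rxx')).
Qed.

Lemma index_filter_lt (P : pred nat) (w : seq nat) a b : P a -> P b ->
  (index b (filter P w) < index a (filter P w)) = (index b w < index a w).
Proof.
move=> Pa Pb; elim: w => [|c w IH] //=.
case: (boolP (P c)) => Pc /=.
- by case: (c == b); case: (c == a) => //=; rewrite ltnS IH.
- have ca : c != a by apply/eqP => E; move: Pc; rewrite E Pa.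
  have cb : c != b by apply/eqP => E; move: Pc; rewrite E Pb.
  by rewrite (negbTE ca) (negbTE cb) ltnS IH.
Qed.

Lemma inv_filter (P : pred nat) w a b :
  ((a, b) \in inv (filter P w)) = [&& P a, P b & (a, b) \in inv w].
Proof.
rewrite !mem_inv !mem_filter.
case: (boolP (P a)) => Pa //=; case: (boolP (P b)) => Pb //=; rewrite ?andbF //.
by rewrite index_filter_lt.
Qed.

Lemma inv_cat w1 w2 a b : uniq (w1 ++ w2) ->
  ((a, b) \in inv (w1 ++ w2)) =
  [|| (a, b) \in inv w1, (a, b) \in inv w2 | [&& a \in w2, b \in w1 & a < b]].
Proof.
move=> U; rewrite cat_uniq in U; case/and3P: U => u1 dis u2.
have E1 : forall c, c \in w1 -> c \notin w2.
  by move=> c c1; apply/negP => c2; move/hasP: dis; apply; exists c.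
rewrite !mem_inv !mem_cat !index_cat.
case: (boolP (a \in w1)) => a1; case: (boolP (b \in w1)) => b1 /=.
- by rewrite (negbTE (E1 _ a1)) /= !orbF.
- have h := index_mem a w1; rewrite a1 in h.
  have h' : (size w1 + index b w2 < index a w1) = false.
    by apply/negbTE; rewrite -leqNgt; lia.
  by rewrite (negbTE (E1 _ a1)) /= h' !andbF.
- have h := index_mem b w1; rewrite b1 in h.
  have h' : (index b w1 < size w1 + index a w2) = true by lia.
  by rewrite (negbTE (E1 _ b1)) /= h' !andbT !andbF.
- by rewrite ltn_add2l andbF orbF.
Qed.

Lemma inv_map_add p v a b :
  ((a, b) \in inv (map (addn p) v)) = (p <= a) && ((a - p, b - p) \in inv v).
Proof.
rewrite !mem_inv.
case: (leqP p a) => pa /=; last first.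
  by apply/negbTE; apply/negP => /andP[/mapP[c _ E] _]; lia.
case: (ltnP a b) => ab; last first.
  by rewrite !andbF; apply/esym/negbTE; rewrite ltnNge; apply/negPn; lia.
have [a' Ea] : exists a', a = p + a' by exists (a - p); lia.
have [b' Eb] : exists b', b = p + b' by exists (b - p); lia.
subst a b; rewrite ltn_add2l in ab.
rewrite !addKn !(mem_map (@addnI p)) !index_map ?ab //; exact: addnI.
Qed.

Definition lo p (w : seq nat) := [seq a <- w | a < p].
Definition hi p (w : seq nat) := [seq a <- w | p <= a].
Definition r2 p (w : seq nat) := map (subn^~ p) (hi p w).
Definition tau p (u v : seq nat) := map (addn p) v ++ u.

Lemma count_lt_iota k m a : k <= a <= k + m ->
  count (fun b => b < a) (iota k m) = a - k.
Proof.
move=> /andP[ka am].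
have -> : m = (a - k) + (k + m - a) by lia.
rewrite iotaD count_cat.
rewrite (@eq_in_count _ _ predT) ?count_predT ?size_iota; last first.
  move=> i; rewrite mem_iota => /andP[_ h] /=; lia.
rewrite (@eq_in_count _ _ pred0) ?count_pred0 ?addn0 //.
move=> i; rewrite mem_iota => /andP[h _] /=; lia.
Qed.

Lemma st_perm_iota k m s : perm_eq s (iota k m) -> st s = map (subn^~ k) s.
Proof.
move=> Hp; apply/eq_in_map => a aS.
have : a \in iota k m by rewrite -(perm_mem Hp).
rewrite mem_iota => /andP[h1 h2].
by have /permP -> := Hp; rewrite count_lt_iota //; rewrite h1 /= ltnW.
Qed.

Lemma map_subn0 (s : seq nat) : map (subn^~ 0) s = s.
Proof. by rewrite (eq_map (g := id)) ?map_id // => a; rewrite subn0. Qed.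

Section Blocks.
Variables p q : nat.

Lemma iota_lo : [seq a <- iota 0 (p + q) | a < p] = iota 0 p.
Proof.
rewrite iotaD filter_cat add0n.
rewrite (@eq_in_filter _ _ predT) ?filter_predT; last by move=> i; rewrite mem_iota.
rewrite (@eq_in_filter _ _ pred0) ?filter_pred0 ?cats0 //.
by move=> i; rewrite mem_iota => /andP[h _] /=; apply/negbTE; rewrite -leqNgt.
Qed.

Lemma iota_hi : [seq a <- iota 0 (p + q) | p <= a] = iota p q.
Proof.
rewrite iotaD filter_cat add0n.
rewrite (@eq_in_filter _ _ pred0) ?filter_pred0; last first.
  by move=> i; rewrite mem_iota => /andP[_ h] /=; apply/negbTE; rewrite -ltnNge.
by rewrite (@eq_in_filter _ _ predT) ?filter_predT // => i; rewrite mem_iota => /andP[].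
Qed.

Lemma lo_S x : x \in S (p + q) -> lo p x \in S p.
Proof. by rewrite !memS => H; rewrite -iota_lo /lo perm_filter. Qed.

Lemma hi_perm x : x \in S (p + q) -> perm_eq (hi p x) (iota p q).
Proof. by rewrite !memS => H; rewrite -iota_hi /hi perm_filter. Qed.

Lemma map_subK (s : seq nat) : all (fun a => p <= a) s -> map (addn p) (map (subn^~ p) s) = s.
Proof.
move=> /allP H; rewrite -map_comp; rewrite -[RHS]map_id; apply/eq_in_map => a /H /= h.
by rewrite subnKC.
Qed.

Lemma hi_r2 x : map (addn p) (r2 p x) = hi p x.
Proof. by rewrite /r2 map_subK //; apply/allP => a; rewrite mem_filter => /andP[]. Qed.

Lemma r2_S x : x \in S (p + q) -> r2 p x \in S q.
Proof.
move=> xS; rewrite memS /r2.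
have -> : iota 0 q = map (subn^~ p) (iota p q).
  have -> : iota p q = map (addn p) (iota 0 q) by rewrite -iotaDl addn0.
  by rewrite -map_comp -[LHS]map_id; apply: eq_map => a /=; rewrite addKn.
by apply: perm_map; apply: hi_perm.
Qed.

Lemma st_lo x : x \in S (p + q) -> st (lo p x) = lo p x.
Proof. by move/lo_S; rewrite memS => /st_perm_iota ->; rewrite map_subn0. Qed.

Lemma st_hi x : x \in S (p + q) -> st (hi p x) = r2 p x.
Proof. by move/hi_perm => /st_perm_iota ->. Qed.

Lemma xbar_eq x : x \in S (p + q) -> xbar p x = cross (lo p x) (r2 p x).
Proof. by move=> xS; rewrite /xbar -/(lo p x) -/(hi p x) st_lo // st_hi. Qed.

Lemma cross_eq u v : size u = p -> cross u v = u ++ map (addn p) v.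
Proof. by rewrite /cross => ->. Qed.

Lemma mem_shift v b : v \in S q -> (b \in map (addn p) v) = (p <= b < p + q).
Proof.
move=> vS; case: (leqP p b) => pb /=.
- have -> : b = p + (b - p) by lia.
  by rewrite (mem_map (@addnI p)) (S_mem _ vS) ltn_add2l.
- by apply/negbTE/negP => /mapP[c _ E]; lia.
Qed.

Lemma cross_S u v : u \in S p -> v \in S q -> cross u v \in S (p + q).
Proof.
move=> uS vS; rewrite cross_eq ?(S_size uS) // memS.
have -> : iota 0 (p + q) = iota 0 p ++ map (addn p) (iota 0 q) by rewrite iotaD -iotaDl add0n addn0.
apply: perm_cat; first by rewrite -memS.
by apply: perm_map; rewrite -memS.
Qed.

Lemma tau_S u v : u \in S p -> v \in S q -> tau p u v \in S (p + q).
Proof.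
move=> uS vS; rewrite memS /tau.
rewrite perm_catC.
by rewrite -memS -cross_eq ?(S_size uS) //; apply: cross_S.
Qed.

Lemma cross_inj u v u' v' : size u = p -> size u' = p ->
  cross u v = cross u' v' -> u = u' /\ v = v'.
Proof.
move=> su su'; rewrite !cross_eq // => E.
have Eu : u = u' by have := congr1 (take p) E; rewrite !take_size_cat.
subst u'; split=> //.
have := congr1 (drop p) E; rewrite !drop_size_cat // => E'.
exact: (inj_map (@addnI p) E').
Qed.

Lemma inv_lo w a b : ((a, b) \in inv (lo p w)) = (b < p) && ((a, b) \in inv w).
Proof.
rewrite /lo inv_filter.
case: (ltnP b p) => bp /=; last by rewrite andbF.
case: (boolP ((a, b) \in inv w)); rewrite ?andbF ?andbT // mem_inv => /and4P[_ _ ab _].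
exact: ltn_trans ab bp.
Qed.

Lemma inv_r2 x a b : ((a, b) \in inv (r2 p x)) = ((p + a, p + b) \in inv x).
Proof.
have := inv_map_add p (r2 p x) (p + a) (p + b).
rewrite hi_r2 !addKn leq_addr /= => <-.
by rewrite /hi inv_filter !leq_addr.
Qed.

Lemma inv_cross u v a b : u \in S p -> v \in S q ->
  ((a, b) \in inv (cross u v)) =
  ((a, b) \in inv u) || (p <= a) && ((a - p, b - p) \in inv v).
Proof.
move=> uS vS; have U := S_uniq (cross_S uS vS).
rewrite cross_eq ?(S_size uS) // in U *.
rewrite inv_cat // inv_map_add (mem_shift _ vS) (S_mem _ uS).
case: (boolP (p <= a)) => pa; case: (ltnP b p) => bp /=; rewrite ?andbF ?orbF //.
have -> : (a < b) = false by apply/negbTE; rewrite -leqNgt; lia.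
by rewrite andbF orbF.
Qed.

Lemma inv_tau u v a b : u \in S p -> v \in S q ->
  ((a, b) \in inv (tau p u v)) =
  ((a, b) \in inv (cross u v)) || [&& a < p, p <= b & b < p + q].
Proof.
move=> uS vS; have U := S_uniq (tau_S uS vS).
rewrite /tau in U *; rewrite inv_cat // inv_cross // inv_map_add (mem_shift _ vS) (S_mem _ uS).
have -> : [&& a < p, p <= b < p + q & a < b] = [&& a < p, p <= b & b < p + q].
  case: (ltnP a p) => ap //=; case: (leqP p b) => pb //=.
  have ab : a < b by lia.
  by rewrite ab andbT.
by case: ((a, b) \in inv u); case: (_ && _).
Qed.

End Blocks.

Lemma iota_S k : iota 0 k \in S k.
Proof. by rewrite memS. Qed.

Lemma inv_iota k a b : ((a, b) \in inv (iota 0 k)) = false.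
Proof.
rewrite mem_inv !mem_iota /=.
case: (ltnP a k) => ak; case: (ltnP b k) => bk //=; rewrite ?andbF //.
have ia : index a (iota 0 k) = a.
  by have := @index_uniq _ 0 a (iota 0 k); rewrite size_iota nth_iota // iota_uniq; apply.
have ib : index b (iota 0 k) = b.
  by have := @index_uniq _ 0 b (iota 0 k); rewrite size_iota nth_iota // iota_uniq; apply.
rewrite ia ib; case: (ltnP a b) => //= ab; apply/negbTE; rewrite -leqNgt ltnW //.
Qed.

Lemma inv_rev_iota k a b : ((a, b) \in inv (rev (iota 0 k))) = (a < b) && (b < k).
Proof. by rewrite (inv_rev _ _ (iota_S k)) inv_iota andbT. Qed.

Section Mult.
Variables (p q : nat).

Lemma inv_xbar x a b : x \in S (p + q) ->
  ((a, b) \in inv (cross (lo p x) (r2 p x))) = ((b < p) || (p <= a)) && ((a, b) \in inv x).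
Proof.
move=> xS; rewrite (inv_cross _ _ (lo_S xS) (r2_S xS)) inv_lo inv_r2.
case: (ltnP b p) => bp /=.
- case: (boolP ((a, b) \in inv x)) => //= H.
  case: (leqP p a) => pa //=; apply/negbTE; rewrite mem_inv.
  by apply/negP => /and4P[_ _ h _]; lia.
- by case: (leqP p a) => pa //=; rewrite !subnKC.
Qed.

Definition m0 := cross (rev (iota 0 p)) (rev (iota 0 q)).

Lemma revS k : rev (iota 0 k) \in S k.
Proof. exact: rev_S (iota_S k). Qed.

Lemma m0S : m0 \in S (p + q).
Proof. exact: cross_S (revS p) (revS q). Qed.

Lemma inv_m0 a b : ((a, b) \in inv m0) =
  ((a < b) && (b < p)) || (p <= a) && ((a - p < b - p) && (b - p < q)).
Proof. by rewrite /m0 (inv_cross _ _ (revS p) (revS q)) !inv_rev_iota. Qed.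

Lemma xbar_meet x : x \in S (p + q) -> is_meet (p + q) (cross (lo p x) (r2 p x)) x m0.
Proof.
move=> xS; split.
- exact: cross_S (lo_S xS) (r2_S xS).
- by apply/weak_leP => a b; rewrite inv_xbar // => /andP[].
- apply/weak_leP => a b; rewrite inv_xbar // inv_m0 => /andP[H].
  rewrite (mem_invS _ _ xS) => /and3P[ab bn _].
  by case/orP: H => H; apply/orP; [left|right]; lia.
- move=> z zS /weak_leP zx /weak_leP zm; apply/weak_leP => a b H.
  rewrite inv_xbar // zx // andbT.
  move: (zm a b H); rewrite inv_m0; lia.
Qed.

Variable Theta : nat -> rel (seq nat).
Hypothesis HF : H_family Theta.

Lemma HC n : lattice_congruence n (Theta n).
Proof. by case: HF. Qed.
Lemma HT : translational Theta.
Proof. by case: HF => _ []. Qed.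

Lemma stepA x y : x \in S (p + q) -> y \in S (p + q) -> Theta (p + q) x y ->
  Theta p (lo p x) (lo p y) /\ Theta q (r2 p x) (r2 p y).
Proof.
move=> xS yS Hxy.
have H := Rmeet (HC (p + q)) xS yS m0S Hxy (xbar_meet xS) (xbar_meet yS).
by move/(HT (lo_S xS) (lo_S yS) (r2_S xS) (r2_S yS)): H.
Qed.

Definition mp := tau p (iota 0 p) (iota 0 q).

Lemma inv_mp a b : ((a, b) \in inv mp) = [&& a < p, p <= b & b < p + q].
Proof.
by rewrite /mp (inv_tau _ _ (iota_S p) (iota_S q)) (inv_cross _ _ (iota_S p) (iota_S q)) !inv_iota andbF.
Qed.

Lemma tau_join u v : u \in S p -> v \in S q -> is_join (p + q) (tau p u v) (cross u v) mp.
Proof.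
move=> uS vS; split.
- exact: tau_S.
- by apply/weak_leP => a b H; rewrite (inv_tau _ _ uS vS) H.
- by apply/weak_leP => a b H; rewrite (inv_tau _ _ uS vS) -inv_mp H orbT.
- move=> z zS /weak_leP H1 /weak_leP H2; apply/weak_leP => a b.
  rewrite (inv_tau _ _ uS vS) -inv_mp => /orP[/H1|/H2] //.
Qed.

Lemma lo_tau u v : u \in S p -> lo p (tau p u v) = u.
Proof.
move=> uS; rewrite /lo /tau filter_cat.
rewrite (@eq_in_filter _ _ pred0) ?filter_pred0 /=; last first.
  by move=> c /mapP[d _ ->] /=; apply/negbTE; rewrite -leqNgt leq_addr.
rewrite (@eq_in_filter _ _ predT) ?filter_predT // => c cu.
by rewrite (S_mem _ uS) in cu; rewrite cu.
Qed.

Lemma r2_tau u v : u \in S p -> v \in S q -> r2 p (tau p u v) = v.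
Proof.
move=> uS vS; rewrite /r2 /hi /tau filter_cat.
rewrite (@eq_in_filter _ _ pred0 u) ?filter_pred0 ?cats0; last first.
  by move=> c cu; rewrite (S_mem _ uS) in cu; apply/negbTE; rewrite -ltnNge.
rewrite (@eq_in_filter _ _ predT) ?filter_predT; last by move=> c /mapP[d _ ->]; rewrite leq_addr.
by rewrite -map_comp -[RHS]map_id; apply: eq_map => c /=; rewrite addKn.
Qed.

Lemma x_le_tau x : x \in S (p + q) -> weak_le x (tau p (lo p x) (r2 p x)).
Proof.
move=> xS; apply/weak_leP => a b H.
rewrite (inv_tau _ _ (lo_S xS) (r2_S xS)) inv_xbar // H andbT.
move: H; rewrite (mem_invS _ _ xS) => /and3P[ab bn _].
case: (ltnP b p) => //= bp; case: (leqP p a) => //= ap.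
Qed.

Lemma lo_mono z w : weak_le z w -> weak_le (lo p z) (lo p w).
Proof. by move/weak_leP=> H; apply/weak_leP => a b; rewrite !inv_lo => /andP[-> /H]. Qed.

Lemma r2_mono z w : weak_le z w -> weak_le (r2 p z) (r2 p w).
Proof. by move/weak_leP=> H; apply/weak_leP => a b; rewrite !inv_r2 => /H. Qed.

Lemma stepB x u v : is_min (p + q) (Theta (p + q)) x ->
  is_min p (Theta p) u -> is_min q (Theta q) v ->
  Theta p u (lo p x) -> Theta q v (r2 p x) -> lo p x = u /\ r2 p x = v.
Proof.
move=> [xS xmin] [uS umin] [vS vmin] Hu Hv.
have aS := lo_S xS; have bS := r2_S xS.
have Hc : Theta (p + q) (cross u v) (cross (lo p x) (r2 p x)).
  by apply/(HT uS aS vS bS).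
have Ht : Theta (p + q) (tau p u v) (tau p (lo p x) (r2 p x)).
  apply: (Rjoin (HC _) _ _ _ Hc (tau_join uS vS) (tau_join aS bS)).
  - exact: cross_S.
  - exact: cross_S.
  - by rewrite /mp; apply: tau_S; apply: iota_S.
have [z Hz] := meet_exists xS (tau_S uS vS).
have Hxz : Theta (p + q) x z.
  apply: (Rmeet (HC _) (tau_S aS bS) (tau_S uS vS) xS
            (Rsym (HC _) (tau_S uS vS) (tau_S aS bS) Ht)).
  - exact/is_meet_sym/is_meet_le/x_le_tau.
  - exact: is_meet_sym.
case: (Hz) => zS zx zt _.
have xz : weak_le x z by apply: xmin.
have xt := weak_le_trans xz zt.
split.
- apply: (weak_le_antisym (lo_S xS) uS).
  + by rewrite -[u in weak_le _ u](lo_tau v uS); apply: lo_mono.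
  + exact: umin.
- apply: (weak_le_antisym (r2_S xS) vS).
  + by rewrite -[v in weak_le _ v](r2_tau uS vS); apply: r2_mono.
  + exact: vmin.
Qed.
End Mult.

Definition srt (s : seq nat) := sort leq s.
Definition relab (Q a : seq nat) := map (nth 0 (srt Q)) a.

Lemma srt_perm s : perm_eq (srt s) s.
Proof. by rewrite /srt perm_sort. Qed.

Lemma srt_sorted_ltn s : uniq s -> sorted ltn (srt s).
Proof.
move=> us; rewrite ltn_sorted_uniq_leq (perm_uniq (srt_perm s)) us /=.
exact: sort_sorted leq_total _.
Qed.

Lemma index_count_sorted t c : sorted ltn t -> c \in t ->
  index c t = count (fun d => d < c) t.
Proof.
elim: t => [|d t IH] //= Hs; rewrite in_cons.
have Ht := path_sorted Hs.
have Hall := order_path_min ltn_trans Hs.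
case: (eqVneq d c) => [Edc|dc] /= Hin.
  subst c; rewrite ?eqxx ltnn add0n; apply/esym/eqP; rewrite -leqn0 leqNgt -has_count.
  apply/negP => /hasP[e et /= ec]; move/allP: Hall => /(_ e et) /= ce; lia.
have dlt : d < c by move/allP: Hall => /(_ c Hin).
by rewrite dlt IH.
Qed.

Lemma st_index s : uniq s -> st s = map (index^~ (srt s)) s.
Proof.
move=> us; apply/eq_in_map => a aS /=.
rewrite index_count_sorted ?srt_sorted_ltn ?(perm_mem (srt_perm s)) //.
by have /permP -> := srt_perm s.
Qed.

Lemma map_index_iota (t : seq nat) : uniq t -> map (index^~ t) t = iota 0 (size t).
Proof.
move=> ut; apply: (@eq_from_nth _ 0); rewrite size_map ?size_iota // => i it.
by rewrite (nth_map 0) // nth_iota // index_uniq.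
Qed.

Lemma st_S s : uniq s -> st s \in S (size s).
Proof.
move=> us; rewrite st_index // memS.
have ut : uniq (srt s) by rewrite (perm_uniq (srt_perm s)).
rewrite -(perm_size (srt_perm s)) -map_index_iota //.
by apply: perm_map; rewrite perm_sym srt_perm.
Qed.

Lemma relab_st s : uniq s -> relab s (st s) = s.
Proof.
move=> us; rewrite st_index // /relab -map_comp -[RHS]map_id.
apply/eq_in_map => a aS /=; rewrite nth_index //.
by rewrite (perm_mem (srt_perm s)).
Qed.

Lemma size_relab Q a : size (relab Q a) = size a.
Proof. by rewrite size_map. Qed.

Lemma relab_perm Q a : a \in S (size Q) -> perm_eq (relab Q a) Q.
Proof.
move=> aS; rewrite /relab.
apply: (@perm_trans _ (map (nth 0 (srt Q)) (iota 0 (size Q)))).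
  by apply: perm_map; rewrite -memS.
rewrite -(perm_size (srt_perm Q)) map_nth_iota0 // take_size.
exact: srt_perm.
Qed.

Lemma srt_relab Q a : a \in S (size Q) -> srt (relab Q a) = srt Q.
Proof.
move=> aS; apply/(perm_sortP leq_total leq_trans anti_leq).
exact: relab_perm.
Qed.

Lemma st_relab Q a : uniq Q -> a \in S (size Q) -> st (relab Q a) = a.
Proof.
move=> uQ aS.
have uR : uniq (relab Q a) by rewrite (perm_uniq (relab_perm aS)).
rewrite st_index // srt_relab // /relab -map_comp -[RHS]map_id.
apply/eq_in_map => i iA /=.
rewrite index_uniq // ?(perm_uniq (srt_perm Q)) //.
by rewrite (perm_size (srt_perm Q)) -(S_mem _ aS).
Qed.

Lemma relab_relab Q a b : a \in S (size Q) -> relab (relab Q a) b = relab Q b.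
Proof. by move=> aS; rewrite /relab -/(relab Q a) srt_relab. Qed.

Section Split.
Variables (k m : nat).

Definition phi (a b y : seq nat) := relab (take k y) a ++ relab (drop k y) b.

Lemma size_take_S y : y \in S (k + m) -> size (take k y) = k.
Proof. by move=> yS; rewrite size_takel // (S_size yS) leq_addr. Qed.

Lemma size_drop_S y : y \in S (k + m) -> size (drop k y) = m.
Proof. by move=> yS; rewrite size_drop (S_size yS) addKn. Qed.

Lemma phi_S a b y : y \in S (k + m) -> a \in S k -> b \in S m -> phi a b y \in S (k + m).
Proof.
move=> yS aS bS; rewrite memS /phi.
apply: (@perm_trans _ y); last by rewrite -memS.
rewrite -{3}(cat_take_drop k y); apply: perm_cat; apply: relab_perm.
- by rewrite size_take_S.
- by rewrite size_drop_S.
Qed.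

Lemma take_phi a b y : y \in S (k + m) -> a \in S k -> take k (phi a b y) = relab (take k y) a.
Proof. by move=> yS aS; rewrite /phi take_size_cat // size_relab (S_size aS). Qed.

Lemma drop_phi a b y : y \in S (k + m) -> a \in S k -> drop k (phi a b y) = relab (drop k y) b.
Proof. by move=> yS aS; rewrite /phi drop_size_cat // size_relab (S_size aS). Qed.

Lemma phi_K a b a' b' y : y \in S (k + m) -> a \in S k -> a' \in S k -> b' \in S m ->
  st (take k y) = a -> st (drop k y) = b -> phi a b (phi a' b' y) = y.
Proof.
move=> yS aS a'S b'S Ea Eb.
have uy := S_uniq yS.
rewrite /phi take_phi // drop_phi //.
rewrite !relab_relab ?size_take_S ?size_drop_S //.
by rewrite -Ea -Eb !relab_st ?take_uniq ?drop_uniq // cat_take_drop.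
Qed.

Variable Theta : nat -> rel (seq nat).
Hypothesis HF : H_family Theta.
Variable x0 : seq nat.
Hypothesis x0S : x0 \in S (k + m).

Definition Pab (a b : seq nat) y :=
  [&& Theta (k + m) x0 y, st (take k y) == a & st (drop k y) == b].

Lemma count_le a b a' b' : a \in S k -> a' \in S k -> b \in S m -> b' \in S m ->
  Theta k a a' -> Theta m b b' ->
  count (Pab a b) (S (k + m)) <= count (Pab a' b') (S (k + m)).
Proof.
move=> aS a'S bS b'S Ha Hb.
have [HC [_ HI]] := HF.
rewrite -!size_filter -(size_map (phi a' b')).
apply: uniq_leq_size.
- rewrite map_inj_in_uniq ?filter_uniq ?permutations_uniq //.
  move=> y1 y2; rewrite !mem_filter => /andP[/and3P[_ /eqP E1 /eqP F1] y1S]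
     /andP[/and3P[_ /eqP E2 /eqP F2] y2S] E.
  by rewrite -(phi_K y1S aS a'S b'S E1 F1) E (phi_K y2S aS a'S b'S E2 F2).
- move=> z /mapP[y]; rewrite mem_filter => /andP[/and3P[Hy /eqP E1 /eqP F1] yS] ->.
  have zS := phi_S yS a'S b'S.
  rewrite mem_filter zS /Pab take_phi // drop_phi // !st_relab ?take_uniq ?drop_uniq
    ?(S_uniq yS) ?size_take_S ?size_drop_S // !eqxx !andbT.
  have Hyz : Theta (k + m) y (phi a' b' y).
    apply: (HI k m (take k y) _ _ _ a a' b b') => //.
    + by rewrite take_uniq // (S_uniq yS).
    + exact: size_take_S.
    + by apply/allP => c /mem_take; rewrite (S_mem _ yS).
    + by rewrite /is_phi yS perm_refl E1 F1 !eqxx.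
    + rewrite /is_phi zS take_phi // drop_phi // relab_perm ?size_take_S //=.
      by rewrite !st_relab ?take_uniq ?drop_uniq ?(S_uniq yS) ?size_take_S ?size_drop_S // !eqxx.
  exact: (Rtrans (HC _) x0S yS zS Hy Hyz).
Qed.

Lemma count_eq a b a' b' : a \in S k -> a' \in S k -> b \in S m -> b' \in S m ->
  Theta k a a' -> Theta m b b' ->
  count (Pab a b) (S (k + m)) = count (Pab a' b') (S (k + m)).
Proof.
move=> aS a'S bS b'S Ha Hb; have [HC _] := HF.
apply/eqP; rewrite eqn_leq count_le //=.
by apply: count_le => //; apply: Rsym.
Qed.
End Split.

Import GRing.Theory.

Section Final.
Variables (K : fieldType) (Theta : nat -> rel (seq nat)).
Hypothesis HF : H_family Theta.
Local Open Scope ring_scope.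

Lemma HCn n : lattice_congruence n (Theta n).
Proof. by case: HF. Qed.

Lemma sum_single (T : eqType) (r : seq T) j (F : T -> K) : uniq r -> j \in r ->
  (forall i, i \in r -> i != j -> F i = 0) -> \sum_(i <- r) F i = F j.
Proof.
move=> ur jr H; rewrite (bigD1_seq j) //= big1_seq ?addr0 //.
by move=> i /andP[ij ir]; apply: H.
Qed.

Lemma sum_zero (T : eqType) (r : seq T) (F : T -> K) :
  (forall i, i \in r -> F i = 0) -> \sum_(i <- r) F i = 0.
Proof. by move=> H; rewrite big1_seq // => i /andP[_ ir]; apply: H. Qed.

Lemma natb_mul (b1 b2 : bool) : (b1%:R : K) * b2%:R = (b1 && b2)%:R.
Proof. by case: b1; case: b2; rewrite ?mul1r ?mul0r. Qed.

Lemma part1 (s : seq (seq nat)) (a : seq nat -> K) :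
  uniq s -> all (fun x => inZ Theta (size x) x) s ->
  (forall y, \sum_(x <- s) a x * cmap K Theta (size x) x y = 0) ->
  forall x, x \in s -> a x = 0.
Proof.
move=> us /allP hs H x0 x0s.
have := H x0; rewrite (sum_single us x0s).
- have /inZP [x0S _] := hs x0 x0s.
  by rewrite /cmap x0S (Rrefl (HCn _) x0S) mulr1.
- move=> x xs nx.
  rewrite /cmap; case: (boolP (x0 \in S (size x))) => x0S /=; last by rewrite mulr0.
  case: (boolP (Theta (size x) x x0)) => Hx /=; last by rewrite mulr0.
  have hx : is_min (size x) (Theta (size x)) x by apply/inZP; exact: hs.
  have := min_unique (HCn (size x)) hx.
  have hx0 : is_min (size x) (Theta (size x)) x0.
    by have /inZP := hs x0 x0s; rewrite (S_size x0S).
  by move=> /(_ x0 hx0 Hx) E; rewrite E eqxx in nx.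
Qed.

Lemma part2 y : cmap K Theta 0 [::] y = (y == [::])%:R.
Proof.
rewrite /cmap /S /=; rewrite in_cons in_nil orbF.
case: (eqVneq y [::]) => [->|] //=.
by rewrite (Rrefl (HCn 0)) //.
Qed.


Lemma key_mult p q u v x y : is_min p (Theta p) u -> is_min q (Theta q) v ->
  is_min (p + q) (Theta (p + q)) x -> y \in S (p + q) -> Theta (p + q) x y ->
  (xbar p x == cross u v) = Theta p u (lo p y) && Theta q v (r2 p y).
Proof.
move=> hu hv hx yS Rxy.
have [uS _] := hu; have [vS _] := hv; have [xS _] := hx.
have [A1 A2] := stepA HF xS yS Rxy.
rewrite (xbar_eq xS); apply/eqP/andP => [E|[Hu Hv]].
- have [E1 E2] := cross_inj (S_size (lo_S xS)) (S_size uS) E.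
  by rewrite -E1 -E2.
- have Hu' : Theta p u (lo p x).
    apply: (Rtrans (HCn p) uS (lo_S yS) (lo_S xS) Hu).
    exact: (Rsym (HCn p) (lo_S xS) (lo_S yS) A1).
  have Hv' : Theta q v (r2 p x).
    apply: (Rtrans (HCn q) vS (r2_S yS) (r2_S xS) Hv).
    exact: (Rsym (HCn q) (r2_S xS) (r2_S yS) A2).
  by have [-> ->] := stepB HF hx hu hv Hu' Hv'.
Qed.

Lemma part3 p q u v : inZ Theta p u -> inZ Theta q v ->
  cmap_lin K Theta (p + q) (prodZ K Theta u v)
  = prodS_lin K p q (cmap K Theta p u) (cmap K Theta q v).
Proof.
move=> /inZP hu /inZP hv; have [uS _] := hu; have [vS _] := hv.
have su := S_size uS; have sv := S_size vS.
apply: functional_extensionality => y.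
rewrite /cmap_lin /prodS_lin.
case: (boolP (y \in S (p + q))) => yS; last first.
  rewrite sum_zero; last by move=> x _; rewrite /cmap (negbTE yS) mulr0.
  rewrite sum_zero // => u' u'S; rewrite sum_zero // => v' v'S.
  by rewrite /prodS (S_size u'S) (S_size v'S) (negbTE yS) mulr0.
have [x [hx Rxy]] := class_min (HCn (p + q)) yS.
have [xS xmin] := hx.
have UU : forall n, uniq (S n) by move=> n; apply: permutations_uniq.
rewrite (sum_single (UU _) xS); last first.
  move=> x' x'S nx'; rewrite /prodZ /cmap su sv.
  case: (boolP (inZ Theta (p + q) x')) => /= hx'; last by rewrite mul0r.
  case: (boolP (Theta (p + q) x' y)) => /= Rx'y; last by rewrite andbF mulr0.
  have /inZP hx'' := hx'.
  have := min_unique (HCn (p + q)) hx'' hx.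
  have R' : Theta (p + q) x' x.
    apply: (Rtrans (HCn _) x'S yS xS Rx'y); exact: (Rsym (HCn _) xS yS Rxy).
  by move=> /(_ R') E; rewrite E eqxx in nx'.
rewrite (sum_single (UU _) (lo_S yS)); last first.
  move=> u' u'S nu'; rewrite sum_zero // => v' v'S.
  rewrite /prodS (S_size u'S) (S_size v'S) yS /= (xbar_eq yS).
  case: (eqVneq (cross (lo p y) (r2 p y)) (cross u' v')) => [E|]; last by rewrite mulr0.
  have [E1 _] := cross_inj (S_size (lo_S yS)) (S_size u'S) E.
  by rewrite E1 eqxx in nu'.
rewrite (sum_single (UU _) (r2_S yS)); last first.
  move=> v' v'S nv'.
  rewrite /prodS (S_size (lo_S yS)) (S_size v'S) yS /= (xbar_eq yS).
  case: (eqVneq (cross (lo p y) (r2 p y)) (cross (lo p y) v')) => [E|]; last by rewrite mulr0.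
  have [_ E2] := cross_inj (S_size (lo_S yS)) (S_size (lo_S yS)) E.
  by rewrite E2 eqxx in nv'.
rewrite /prodZ /cmap /prodS su sv (S_size (lo_S yS)) (S_size (r2_S yS)) yS Rxy.
rewrite (lo_S yS) (r2_S yS) (xbar_eq yS) eqxx /=.
have hxZ : inZ Theta (p + q) x by apply/inZP.
rewrite hxZ /= (key_mult hu hv hx yS Rxy).
by rewrite !mulr1 natb_mul.
Qed.

End Final.

Import GRing.Theory.

Section Comult.
Variables (K : fieldType) (Theta : nat -> rel (seq nat)).
Hypothesis HF : H_family Theta.
Local Open Scope ring_scope.

Lemma sum_count (T : eqType) (r : seq T) (P : pred T) :
  \sum_(i <- r) ((P i)%:R : K) = (count P r)%:R.
Proof.
elim: r => [|c r IH]; first by rewrite big_nil.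
by rewrite big_cons IH /= natrD.
Qed.

Lemma size_st s : size (st s) = size s.
Proof. by rewrite size_map. Qed.

Lemma coprodS_eq n y a b : y \in S n ->
  coprodS K y (a, b) =
  ((size a <= n)%N && (st (take (size a) y) == a) && (st (drop (size a) y) == b))%:R.
Proof.
move=> yS; rewrite /coprodS (S_size yS).
case: (leqP (size a) n) => an /=.
- rewrite (bigD1 (Ordinal (n:=n.+1) (m:=size a) an)) //= big1 ?addr0.
    by rewrite xpair_eqE [a == _]eq_sym [b == _]eq_sym.
  move=> i /negbTE ni; rewrite xpair_eqE.
  case: (eqVneq a (st (take i y))) => [E|] //=.
  have Ei : size a = i by rewrite E size_st size_takel // (S_size yS) -ltnS.
  have Ei' : i = Ordinal (n:=n.+1) (m:=size a) an by apply: val_inj; rewrite /= Ei.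
  by rewrite Ei' eqxx in ni.
- rewrite big1 // => i _; rewrite xpair_eqE.
  case: (eqVneq a (st (take i y))) => [E|] //=.
  have h1 := ltn_ord i.
  have : size a = size (take i y) by rewrite E size_st.
  rewrite size_take (S_size yS); case: ifP => _ h2; lia.
Qed.

Lemma lhs_eq n x a b : coprodS_lin K n (cmap K Theta n x) (a, b) =
  (count (fun y => (size a <= n)%N &&
     [&& Theta n x y, st (take (size a) y) == a & st (drop (size a) y) == b]) (S n))%:R.
Proof.
rewrite /coprodS_lin -sum_count; apply: eq_big_seq => y yS.
rewrite (coprodS_eq _ _ yS) /cmap yS /= natb_mul; congr (_%:R).
by case: (Theta n x y); case: (size a <= n)%N.
Qed.

Lemma rhs_val n (h : seq nat * seq nat -> K) a b ua wb :
  (forall u w, ~~ (inZ Theta (size u) u && inZ Theta (size w) w) -> h (u, w) = 0) ->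
  a \in S (size a) -> (size a <= n)%N -> b \in S (n - size a) ->
  is_min (size a) (Theta (size a)) ua -> Theta (size a) ua a ->
  is_min (n - size a) (Theta (n - size a)) wb -> Theta (n - size a) wb b ->
  cc_lin K Theta n h (a, b) = h (ua, wb).
Proof.
move=> hz aS an bS hua Ra hwb Rb.
have [uaS _] := hua; have [wbS _] := hwb.
have UU : forall n, uniq (S n) by move=> n'; apply: permutations_uniq.
rewrite /cc_lin /= (bigD1 (Ordinal (n:=n.+1) (m:=size a) an)) //= [X in _ + X]big1 ?addr0; last first.
  move=> i ni; apply: sum_zero => u uS; apply: sum_zero => w wS.
  rewrite /cmap; case: (boolP (a \in S i)) => aSi; last by rewrite mulr0 mul0r.
  have Ei : size a = i by rewrite (S_size aSi).
  have : i = Ordinal (n:=n.+1) (m:=size a) an by apply: val_inj; rewrite /= Ei.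
  by move=> E; rewrite E eqxx in ni.
rewrite (sum_single (UU _) uaS); last first.
  move=> u uS nu; apply: sum_zero => w wS.
  rewrite /cmap aS /=; case: (boolP (Theta (size a) u a)) => Rua; last by rewrite mulr0 mul0r.
  rewrite hz ?mul0r //; apply/negP => /andP[/inZP hu _].
  rewrite (S_size uS) in hu.
  have := min_unique (HCn HF (size a)) hu hua.
  have R' : Theta (size a) u ua.
    by apply: (Rtrans (HCn HF _) uS aS uaS Rua); exact: (Rsym (HCn HF _) uaS aS Ra).
  by move=> /(_ R') E; rewrite E eqxx in nu.
rewrite (sum_single (UU _) wbS); last first.
  move=> w wS nw.
  rewrite /cmap bS /=; case: (boolP (Theta (n - size a) w b)) => Rwb; last by rewrite mulr0.
  rewrite hz ?mul0r //; apply/negP => /andP[_ /inZP hw].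
  rewrite (S_size wS) in hw.
  have := min_unique (HCn HF _) hw hwb.
  have R' : Theta (n - size a) w wb.
    by apply: (Rtrans (HCn HF _) wS bS wbS Rwb); exact: (Rsym (HCn HF _) wbS bS Rb).
  by move=> /(_ R') E; rewrite E eqxx in nw.
by rewrite /cmap aS bS Ra Rb /= !mulr1.
Qed.

Lemma rhs_zero n (h : seq nat * seq nat -> K) a b :
  ~~ [&& a \in S (size a), (size a <= n)%N & b \in S (n - size a)] ->
  cc_lin K Theta n h (a, b) = 0.
Proof.
move=> C; rewrite /cc_lin /= big1 // => i _.
apply: sum_zero => u uS; apply: sum_zero => w wS.
rewrite /cmap; case: (boolP (a \in S i)) => aSi; last by rewrite mulr0 mul0r.
case: (boolP (b \in S (n - i))) => bSi; last by rewrite mulr0.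
have Ei : size a = i by rewrite (S_size aSi).
move: C; rewrite Ei aSi bSi /= -ltnS ltn_ord.
done.
Qed.

Lemma part4 n x : inZ Theta n x ->
  coprodS_lin K n (cmap K Theta n x) = cc_lin K Theta n (coprodZ K Theta n x).
Proof.
move=> /inZP hx; have [xS _] := hx.
apply: functional_extensionality => -[a b].
rewrite lhs_eq.
case: (boolP [&& a \in S (size a), (size a <= n)%N & b \in S (n - size a)]); last first.
  move=> C; rewrite rhs_zero //.
  have -> : count (fun y => (size a <= n)%N &&
     [&& Theta n x y, st (take (size a) y) == a & st (drop (size a) y) == b]) (S n) = 0%N.
    apply/eqP; rewrite -leqn0 leqNgt -has_count; apply/hasPn => y yS /=.
    apply: contra C => /andP[an /and3P[_ /eqP Ea /eqP Eb]].
    have uy := S_uniq yS.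
    have h1 : a \in S (size a).
      by have := st_S (take_uniq (size a) uy); rewrite Ea size_takel ?(S_size yS).
    have h2 : b \in S (n - size a).
      by have := st_S (drop_uniq (size a) uy); rewrite Eb size_drop (S_size yS).
    by rewrite h1 an h2.
  done.
move=> /and3P[aS an bS].
have [ua [hua Rua]] := class_min (HCn HF _) aS.
have [wb [hwb Rwb]] := class_min (HCn HF _) bS.
rewrite (rhs_val (ua:=ua) (wb:=wb)) //; last first.
  by move=> u w H; rewrite /coprodZ /rr /= (negbTE H).
have [uaS _] := hua; have [wbS _] := hwb.
rewrite /coprodZ /rr /= (S_size uaS) (S_size wbS).
have hZa : inZ Theta (size a) ua by apply/inZP.
have hZb : inZ Theta (n - size a)%N wb by apply/inZP.
rewrite hZa hZb /= lhs_eq (S_size uaS) an /=.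
congr (_%:R).
have [m Em] : exists m, n = (size a + m)%N by exists (n - size a)%N; lia.
subst n; rewrite addKn in bS wbS hwb Rwb *.
apply: (count_eq HF xS aS uaS bS wbS).
- exact: (Rsym (HCn HF _) uaS aS Rua).
- exact: (Rsym (HCn HF _) wbS bS Rwb).
Qed.
End Comult.

Unset Implicit Arguments.
Local Open Scope ring_scope.

Theorem corollary1p4 (K : fieldType) (Theta : nat -> rel (seq nat)) :
  H_family Theta ->
  [/\ (* c is injective (on K[Z_infty] = span of the Z_n) *)
      (forall (s : seq (seq nat)) (a : seq nat -> K),
         uniq s -> all (fun x => inZ Theta (size x) x) s ->
         (forall y, \sum_(x <- s) a x * cmap K Theta (size x) x y = 0) ->
         forall x, x \in s -> a x = 0),
      (* c preserves the unit *)
      (forall y, cmap K Theta 0 [::] y = (y == [::])%:R),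
      (* c is multiplicative: c (u .Z v) = c u .S c v *)
      (forall p q u v, inZ Theta p u -> inZ Theta q v ->
         cmap_lin K Theta (p + q) (prodZ K Theta u v)
         = prodS_lin K p q (cmap K Theta p u) (cmap K Theta q v)) &
      (* c is comultiplicative: Delta_S (c x) = (c (x) c) (Delta_Z x) *)
      (forall n x, inZ Theta n x ->
         coprodS_lin K n (cmap K Theta n x)
         = cc_lin K Theta n (coprodZ K Theta n x))].
Proof.
move=> HF; split.
- exact: (@part1 K Theta HF).
- exact: (@part2 K Theta HF).
- move=> p q u v hu hv; exact: (@part3 K Theta HF p q u v hu hv).
- move=> n x hx; exact: (@part4 K Theta HF n x hx).
Qed.
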